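(* Let $r\ge1$ be an integer, $A_N\subset\mathbb{R}$ a finite set, $p_0,q_0$ probability distributions on $(A_N)^r$, and $\epsilon\ge0$, $\alpha\ge0$, $\Delta\ge0$. Then $$\overline{\delta}(\epsilon,\alpha,\Delta)\le\Big\{\overline{d}^{\,2}-(\overline{d}^{\,2}-\Delta^2)\exp\Big(-\frac{\overline{H}(p|p_0)+\alpha\overline{H}(q|q_0)}{\epsilon}\Big)\Big\}^{1/2},$$ where for $\epsilon=0$ the exponential is read as its limit as $\epsilon\downarrow0$.
   Context: $\mathcal{D}(p_0)$ is the set of probability distributions $p$ on pairs $(\vec u,\vec u^0)\in(A_N)^r\times(A_N)^r$ with $\sum_{\vec u}p(\vec u,\vec u^0)=p_0(\vec u^0)$; $\mathcal{D}(q_0)$ likewise for pairs $(\vec v,\vec v^0)$. Under $\mathbb{E}_{p,q}$, $(\vec u,\vec u^0)\sim p$ and $(\vec v,\vec v^0)\sim q$ are independent; $d(p,q)=\{\mathbb{E}_{p,q}|\vec u\cdot\vec v-\vec u^0\cdot\vec v^0|^2\}^{1/2}$; $\phi_\Delta(p,q)=H(p)-H(p_0)+\alpha[H(q)-H(q_0)]+\epsilon\,\mathbb{E}_{p_0,q_0}\log\mathbb{P}_{p,q}\{|\vec u\cdot\vec v-\vec u^0\cdot\vec v^0|\le\Delta\mid\vec u^0,\vec v^0\}$, where $H$ is Shannon entropy (natural log), $(\vec u^0,\vec v^0)\sim p_0\times q_0$ in the outer expectation, and $\vec u\sim p(\cdot|\vec u^0)$, $\vec v\sim q(\cdot|\vec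 v^0)$ independently in the conditional probability. Then $\overline{\delta}(\epsilon,\alpha,\Delta)=\sup\{d(p,q):p\in\mathcal{D}(p_0),q\in\mathcal{D}(q_0),\phi_\Delta(p,q)\ge0\}$. Also $\overline{H}(p|p_0)=\max_{p\in\mathcal{D}(p_0)}H(p)-H(p_0)$, $\overline{H}(q|q_0)=\max_{q\in\mathcal{D}(q_0)}H(q)-H(q_0)$, and $\overline{d}=\max\{|\vec u\cdot\vec v-\vec u^0\cdot\vec v^0|:\vec u,\vec v,\vec u^0,\vec v^0\in(A_N)^r\}$. *)

(* Defs.v *)
From HB Require Import structures.
From mathcomp Require Import all_boot all_order all_algebra.
From mathcomp Require Import all_classical all_reals all_analysis.
Set Implicit Arguments. Unset Strict Implicit. Unset Printing Implicit Defensive.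
Import Order.TTheory GRing.Theory Num.Theory.
Import numFieldNormedType.Exports.
Local Open Scope classical_set_scope.
Local Open Scope ring_scope.

Section Defs.
Variables (R : realType) (A : seq R) (r : nat).

Definition vec : finType := {ffun 'I_r -> seq_sub A}.

Definition dot (u v : vec) : R := \sum_(i < r) ssval (u i) * ssval (v i).

Definition is_distr (T : finType) (f : {ffun T -> R}) : Prop :=
  (forall x, 0 <= f x) /\ \sum_x f x = 1.

(* Shannon entropy, natural log; ln 0 is irrelevant since it is multiplied by 0 *)
Definition entropy (T : finType) (f : {ffun T -> R}) : R :=
  - \sum_x f x * ln (f x).

Definition Dset (p0 : {ffun vec -> R}) : set {ffun (vec * vec) -> R} :=
  [set p | is_distr p /\ forall u0 : vec, \sum_(u : vec) p (u, u0) = p0 u0].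

Definition dist (p q : {ffun (vec * vec) -> R}) : R :=
  Num.sqrt (\sum_(x : vec * vec) \sum_(y : vec * vec)
              p x * q y * (dot x.1 y.1 - dot x.2 y.2) ^+ 2).

Definition condprob (p0 q0 : {ffun vec -> R}) (p q : {ffun (vec * vec) -> R})
  (Delta : R) (u0 v0 : vec) : R :=
  \sum_(u : vec) \sum_(v : vec)
     (p (u, u0) / p0 u0) * (q (v, v0) / q0 v0) *
     (if `|dot u v - dot u0 v0| <= Delta then 1 else 0).

Definition eln (x : R) : \bar R := if 0 < x then (ln x)%:E else -oo%E.

Definition phi (eps alpha Delta : R) (p0 q0 : {ffun vec -> R})
  (p q : {ffun (vec * vec) -> R}) : \bar R :=
  (((entropy p - entropy p0) + alpha * (entropy q - entropy q0))%:E
   + eps%:E * (\sum_(u0 : vec) \sum_(v0 : vec)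
                 (p0 u0 * q0 v0)%:E * eln (condprob p0 q0 p q Delta u0 v0)))%E.

Definition deltabar (eps alpha Delta : R) (p0 q0 : {ffun vec -> R}) : R :=
  sup [set x | exists p q, Dset p0 p /\ Dset q0 q /\
                  (0 <= phi eps alpha Delta p0 q0 p q)%E /\ x = dist p q].

Definition Hbar (p0 : {ffun vec -> R}) : R :=
  sup [set x | exists2 p, Dset p0 p & x = entropy p - entropy p0].

Definition dbar : R :=
  \big[Num.max/0]_(u : vec) \big[Num.max/0]_(v : vec)
   \big[Num.max/0]_(u0 : vec) \big[Num.max/0]_(v0 : vec)
     `|dot u v - dot u0 v0|.

Definition expfactor (eps Hs : R) : R :=
  if 0 < eps then expR (- Hs / eps)
  else lim ((fun e : R => expR (- Hs / e)) @ 0^'+).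

End Defs.

(* Main.v *)
Require Import Defs.
From HB Require Import structures.
From mathcomp Require Import all_boot all_order all_algebra.
From mathcomp Require Import all_classical all_reals all_analysis.
From mathcomp Require Import ring lra.
Import Order.TTheory GRing.Theory Num.Theory.
Import numFieldNormedType.Exports.
Local Open Scope classical_set_scope.
Local Open Scope ring_scope.

Section Aux.
Variables (R : realType) (A : seq R) (r : nat).
Local Notation V := (vec A r).

Lemma sum_pair (F : V * V -> R) : \sum_x F x = \sum_(u0 : V) \sum_(u : V) F (u, u0).
Proof.
rewrite exchange_big pair_bigA /=; apply: eq_bigr => -[] //.
Qed.

Lemma bigmax_ge {T : finType} (F : T -> R) j : F j <= \big[Num.max/0]_(i : T) F i.
Proof.
have : j \in index_enum T by rewrite mem_index_enum.
elim: (index_enum T) => //= a s IH; rewrite in_cons big_cons => /orP [/eqP ->|/IH h].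
  by rewrite le_max lexx.
by rewrite le_max h orbT.
Qed.

Lemma bigmax_geP {T : finType} (F : T -> R) j x : x <= F j -> x <= \big[Num.max/0]_(i : T) F i.
Proof. by move=> h; apply: (le_trans h); apply: bigmax_ge. Qed.

Lemma dbar_ge (u v u0 v0 : V) : `|dot u v - dot u0 v0| <= dbar A r.
Proof.
rewrite /dbar.
apply: (@bigmax_geP _ _ u); apply: (@bigmax_geP _ _ v); apply: (@bigmax_geP _ _ u0).
exact: (@bigmax_geP _ _ v0).
Qed.

Lemma marg0 {p0 : {ffun V -> R}} {p : {ffun V * V -> R}} : Dset p0 p -> forall u0, p0 u0 = 0 -> forall u, p (u, u0) = 0.
Proof.
move=> [[p_ge0 _] pm] u0 h0 u.
have := pm u0; rewrite h0 => hs.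
exact: (psumr_eq0P (P := predT) (F := fun u => p (u, u0)) (fun i _ => p_ge0 _) hs).
Qed.

Lemma mul_div_marg (p0 : {ffun V -> R}) (p : {ffun V * V -> R}) (u u0 : V) : Dset p0 p -> p0 u0 * (p (u, u0) / p0 u0) = p (u, u0).
Proof.
move=> hp; have [h0|h0] := eqVneq (p0 u0) 0.
  by rewrite h0 mul0r (marg0 hp u0 h0 u).
by rewrite mulrC divfK.
Qed.

Lemma entropy_term_le1 (x : R) : 0 <= x -> - (x * ln x) <= 1.
Proof.
rewrite le_eqVlt => /orP [/eqP <-|x0]; first by rewrite mul0r oppr0 ler01.
have h : ln (1 + (x^-1 - 1)) <= x^-1 - 1.
  apply: le_ln1Dx; have : 0 < x^-1 by rewrite invr_gt0.
  lra.
move: h; rewrite addrC subrK lnV ?posrE // => h.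
have : x * (- ln x) <= x * (x^-1 - 1) by rewrite ler_wpM2l // ltW.
rewrite mulrBr mulfV ?gt_eqF // mulr1 mulrN => h2.
apply: le_trans h2 _; lra.
Qed.

Lemma entropy_ub (T : finType) (f : {ffun T -> R}) : is_distr f ->
  entropy f <= \sum_(x : T) 1.
Proof.
move=> [f0 _]; rewrite /entropy -sumrN; apply: ler_sum => x _.
exact: entropy_term_le1.
Qed.

Definition Hset (p0 : {ffun V -> R}) :=
  [set x | exists2 p : {ffun V * V -> R}, Dset p0 p & x = entropy p - entropy p0].

Lemma Hbar_ub (p0 : {ffun V -> R}) (p : {ffun V * V -> R}) :
  Dset p0 p -> entropy p - entropy p0 <= Hbar p0.
Proof.
move=> hp.
have hub : has_ubound (Hset p0).
  exists (\sum_(x : V * V) 1 - entropy p0) => y /= [p' hp' ->].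
  by rewrite lerD2r; apply: entropy_ub; case: hp'.
exact: (ub_le_sup hub) (ex_intro2 _ _ p hp erefl).
Qed.

Lemma card_pos (p0 : {ffun V -> R}) : is_distr p0 -> (0 < #|V|)%N.
Proof.
move=> [_ s1]; apply/card_gt0P.
case: (pickP (fun x : V => p0 x != 0)) => [x _|h]; first by exists x.
exfalso; move: s1; rewrite big1 => [|x _]; last by move/negbFE/eqP: (h x).
by move/eqP; rewrite eq_sym oner_eq0.
Qed.

Lemma Hbar_uniform (p0 : {ffun V -> R}) : is_distr p0 -> ln (#|V|%:R : R) <= Hbar p0.
Proof.
move=> hd; set N : R := #|V|%:R.
have N0 : 0 < N by rewrite ltr0n (card_pos _ hd).
have [p0_ge0 p0s] := hd.
pose p := [ffun x : V * V => p0 x.2 / N].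
have hp : Dset p0 p.
  split; first split.
  - by move=> x; rewrite ffunE divr_ge0 // ltW.
  - rewrite sum_pair -[RHS]p0s; apply: eq_bigr => u0 _.
    under eq_bigr do rewrite ffunE /=.
    rewrite sumr_const -mulr_natr -/N; field; exact: lt0r_neq0.
  - move=> u0; under eq_bigr do rewrite ffunE /=.
    rewrite sumr_const -mulr_natr -/N; field; exact: lt0r_neq0.
apply: (le_trans _ (Hbar_ub _ _ hp)).
suff -> : entropy p - entropy p0 = ln N by [].

have e : \sum_x p x * ln (p x) = \sum_u0 (p0 u0 * ln (p0 u0) - p0 u0 * ln N).
  rewrite sum_pair; apply: eq_bigr => u0 _.
  under eq_bigr do rewrite ffunE /=.
  rewrite sumr_const -mulr_natr -/N.
  have [h0|h0] := eqVneq (p0 u0) 0; first by rewrite h0 !mul0r subrr.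
  have pp : 0 < p0 u0 by rewrite lt0r h0 p0_ge0.
  rewrite ln_div ?posrE //; field; exact: lt0r_neq0.
rewrite /entropy e sumrB -mulr_suml p0s; ring.
Qed.

Definition Xf (x y : V * V) : R := dot x.1 y.1 - dot x.2 y.2.
Definition If (Delta : R) (x y : V * V) : R := if `|Xf x y| <= Delta then 1 else 0.

Lemma sumsum_pq (p q : {ffun V * V -> R}) : is_distr p -> is_distr q ->
  \sum_x \sum_y p x * q y = 1.
Proof.
move=> [_ sp] [_ sq].
have e : forall x, \sum_y p x * q y = p x by move=> x; rewrite -mulr_sumr sq mulr1.
under eq_bigr do rewrite e.
exact: sp.
Qed.

Lemma D2_le (p q : {ffun V * V -> R}) (g : V * V -> V * V -> R) :
  is_distr p -> is_distr q -> (forall x y, Xf x y ^+ 2 <= g x y) ->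
  \sum_x \sum_y p x * q y * (dot x.1 y.1 - dot x.2 y.2) ^+ 2 <=
  \sum_x \sum_y p x * q y * g x y.
Proof.
move=> [p0 _] [q0 _] hg; apply: ler_sum => x _; apply: ler_sum => y _.
by apply: ler_wpM2l; [rewrite mulr_ge0|exact: hg].
Qed.

Lemma Q_eq (p0 q0 : {ffun V -> R}) (p q : {ffun V * V -> R}) Delta :
  Dset p0 p -> Dset q0 q ->
  \sum_u0 \sum_v0 p0 u0 * q0 v0 * condprob p0 q0 p q Delta u0 v0 =
  \sum_x \sum_y p x * q y * If Delta x y.
Proof.
move=> hp hq; rewrite sum_pair; apply: eq_bigr => u0 _.
under [RHS]eq_bigr do rewrite sum_pair.
rewrite [RHS]exchange_big; apply: eq_bigr => v0 _.
rewrite /condprob mulr_sumr; apply: eq_bigr => u _.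
rewrite mulr_sumr; apply: eq_bigr => v _.
rewrite /If /Xf /=.
rewrite -[in RHS](mul_div_marg _ _ u u0 hp) -[in RHS](mul_div_marg _ _ v v0 hq).
ring.
Qed.

Lemma condprob_ge0 (p0 q0 : {ffun V -> R}) (p q : {ffun V * V -> R}) Delta u0 v0 :
  Dset p0 p -> Dset q0 q -> is_distr p0 -> is_distr q0 ->
  0 <= condprob p0 q0 p q Delta u0 v0.
Proof.
move=> [[hp _] _] [[hq _] _] [hp0 _] [hq0 _].
apply: sumr_ge0 => u _; apply: sumr_ge0 => v _.
apply: mulr_ge0; first by apply: mulr_ge0; apply: divr_ge0.
by case: ifP.
Qed.

Lemma term_bound (m w c : R) : 0 < m -> 0 <= w -> 0 <= c ->
  (w%:E * eln c <= (w * (c / m - 1 + ln m))%:E)%E.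
Proof.
move=> m0 w0 c0; rewrite /eln; case: ifPn => cp.
  rewrite -EFinM lee_fin; apply: ler_wpM2l => //.
  have cm : 0 < c / m by rewrite divr_gt0.
  have := @le_ln1Dx R (c / m - 1) ltac:(lra).
  rewrite addrC subrK ln_div ?posrE // => h; lra.
have -> : c = 0 by apply/eqP; rewrite eq_le c0 andbT leNgt.
have [->|wn] := eqVneq w 0; first by rewrite mul0e mul0r.
have wp : 0 < w by rewrite lt0r wn.
by rewrite mulrNy gtr0_sg // mul1e leNye.
Qed.

Lemma key (eps alpha Delta : R) (p0 q0 : {ffun V -> R}) (p q : {ffun V * V -> R}) :
  0 < eps -> 0 <= alpha -> is_distr p0 -> is_distr q0 -> Dset p0 p -> Dset q0 q ->
  (0 <= phi eps alpha Delta p0 q0 p q)%E ->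
  expR (- (Hbar p0 + alpha * Hbar q0) / eps) <=
  \sum_u0 \sum_v0 p0 u0 * q0 v0 * condprob p0 q0 p q Delta u0 v0.
Proof.
move=> e0 a0 hp0 hq0 hp hq hphi.
set Hs := Hbar p0 + alpha * Hbar q0.
set m := expR (- Hs / eps).
set Q := \sum_u0 \sum_v0 _.
have m0 : 0 < m := expR_gt0 _.
have [p0ge p0s] := hp0; have [q0ge q0s] := hq0.
have sW : \sum_(u0 : V) \sum_(v0 : V) p0 u0 * q0 v0 = 1.
  have e : forall u0, \sum_(v0 : V) p0 u0 * q0 v0 = p0 u0.
    by move=> u0; rewrite -mulr_sumr q0s mulr1.
  by under eq_bigr do rewrite e.
have S_le : (\sum_u0 \sum_v0 (p0 u0 * q0 v0)%:E * eln (condprob p0 q0 p q Delta u0 v0)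
    <= (Q / m - 1 + ln m)%:E)%E.
  apply: (@le_trans _ _ (\sum_u0 \sum_v0
     ((p0 u0 * q0 v0) * (condprob p0 q0 p q Delta u0 v0 / m - 1 + ln m))%:E)%E).
    apply: lee_sum => u0 _; apply: lee_sum => v0 _; apply: term_bound => //.
      by rewrite mulr_ge0.
    exact: condprob_ge0.
  under eq_bigr do rewrite sumEFin.
  rewrite sumEFin lee_fin le_eqVlt; apply/orP; left; apply/eqP.
  have e : forall u0 v0, (p0 u0 * q0 v0) * (condprob p0 q0 p q Delta u0 v0 / m - 1 + ln m)
     = (p0 u0 * q0 v0 * condprob p0 q0 p q Delta u0 v0) / m + (p0 u0 * q0 v0) * (ln m - 1).
    by move=> u0 v0; ring.
  under eq_bigr do under eq_bigr do rewrite e.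
  under eq_bigr do rewrite big_split /= -mulr_suml -mulr_suml.
  rewrite big_split /= -mulr_suml -mulr_suml sW mul1r -/Q; lra.
have phi_le : (phi eps alpha Delta p0 q0 p q <=
    ((entropy p - entropy p0 + alpha * (entropy q - entropy q0)) + eps * (Q / m - 1 + ln m))%:E)%E.
  rewrite /phi (EFinD _ (eps * _)) (EFinM eps); apply: leeD2l; apply: lee_wpmul2l => //.
  by rewrite lee_fin ltW.
have h := le_trans hphi phi_le; rewrite lee_fin in h.
have h1 := Hbar_ub _ _ hp; have h2 := Hbar_ub _ _ hq.
have h3 : alpha * (entropy q - entropy q0) <= alpha * Hbar q0 by rewrite ler_wpM2l.
have lm : ln m = - Hs / eps by rewrite /m expRK.
rewrite lm in h.
have e1 : eps * (Q / m - 1 + - Hs / eps) = eps * (Q / m - 1) - Hs.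
  by field; rewrite !gt_eqF.
rewrite e1 in h.
have h4 : 0 <= eps * (Q / m - 1) by rewrite /Hs in h *; lra.
rewrite pmulr_rge0 // subr_ge0 ler_pdivlMr // mul1r in h4.
exact: h4.
Qed.

Lemma sumsum_const (p q : {ffun V * V -> R}) c : is_distr p -> is_distr q ->
  \sum_x \sum_y p x * q y * c = c.
Proof.
move=> hp hq.
have e : forall x, \sum_y p x * q y * c = (\sum_y p x * q y) * c by move=> x; rewrite mulr_suml.
under eq_bigr do rewrite e.
by rewrite -mulr_suml sumsum_pq // mul1r.
Qed.

Lemma X2_le x y : Xf x y ^+ 2 <= dbar A r ^+ 2.
Proof.
have hX := dbar_ge x.1 y.1 x.2 y.2.
rewrite -real_normK ?num_real //; have := normr_ge0 (Xf x y).
rewrite /Xf in hX *; nra.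
Qed.

Lemma lim_zero (Hs : R) : 0 < Hs ->
  lim ((fun e : R => expR (- Hs / e)) @ 0^'+) = 0.
Proof.
move=> H0; apply: cvg_lim => //.
apply/cvgrPdist_lt => eta eta0.
near=> t.
have t0 : 0 < t by near: t; exact: nbhs_right_gt.
have tl : t < eta * Hs by near: t; apply: nbhs_right_lt; rewrite mulr_gt0.
rewrite sub0r normrN gtr0_norm ?expR_gt0 //.
have hg := expR_ge1Dx (Hs / t).
have ex : expR (- Hs / t) * expR (Hs / t) = 1 by rewrite -expRD mulNr addNr expR0.
have f0 : 0 < expR (- Hs / t) := expR_gt0 _.
move: hg ex f0; set f := expR (- Hs / t); set g := expR (Hs / t) => hg ex f0.
have h1 : f * (Hs / t) <= 1.
  have := ler_wpM2l (ltW f0) hg; rewrite mulrDr mulr1 ex => h; lra.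
have h2 : f * Hs <= t by move: h1; rewrite mulrA ler_pdivrMr // mul1r.
have h3 : f * Hs < eta * Hs by apply: le_lt_trans h2 tl.
by rewrite ltr_pM2r in h3.
Unshelve. all: by end_near.
Qed.
End Aux.
Arguments Xf {R A r}. Arguments If {R A r}. Arguments D2_le {R A r}. Arguments Q_eq {R A r}.
Arguments key {R A r}. Arguments X2_le {R A r}. Arguments sumsum_const {R A r}. Arguments Hbar_uniform {R A r}.

Theorem proposition4 (R : realType) (A : seq R) (r : nat)
  (p0 q0 : {ffun vec A r -> R}) (eps alpha Delta : R) :
  (1 <= r)%N -> is_distr p0 -> is_distr q0 ->
  0 <= eps -> 0 <= alpha -> 0 <= Delta ->
  deltabar eps alpha Delta p0 q0 <=
  Num.sqrt (dbar A r ^+ 2 - (dbar A r ^+ 2 - Delta ^+ 2) *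
            expfactor eps (Hbar p0 + alpha * Hbar q0)).
Proof.
move=> r1 hp0 hq0 e0 a0 D0.
rewrite /deltabar.
set S := [set x | _].
case: (pselect (S !=set0)) => [Sne|S0]; last first.
  rewrite (_ : S = set0); first by rewrite sup0 sqrtr_ge0.
  apply/funext => x; apply/propext; split => // Sx; apply: S0; by exists x.
apply: ge_sup => // x [p [q [hp [hq [hphi ->]]]]].
have [pd _] := hp; have [qd _] := hq.
rewrite /dist.
case: (pselect (exists a b : vec A r, a != b)) => [[a [b ab]]|sub]; last first.
  have e : forall a b : vec A r, a = b.
    move=> a b; case: (eqVneq a b) => // ab; exfalso; apply: sub; by exists a, b.
  rewrite big1 => [|x2 _]; last first.
    by apply: big1 => y _; rewrite (e x2.2 x2.1) (e y.2 y.1) subrr expr2 !mulr0.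
  by rewrite sqrtr0 sqrtr_ge0.
set N : R := #|vec A r|%:R.
have N1 : 1 < N by rewrite ltr1n; apply/card_gt1P; exists a, b.
have lnN : 0 < ln N by apply: ln_gt0.
have Hp := Hbar_uniform _ hp0; have Hq := Hbar_uniform _ hq0.
set Hs := Hbar p0 + alpha * Hbar q0.
have Hs0 : 0 < Hs.
  have : 0 <= alpha * Hbar q0 by apply: mulr_ge0 => //; exact: le_trans (ltW lnN) Hq.
  rewrite /Hs; lra.
set Q2 := \sum_x \sum_y p x * q y * If Delta x y.
have Q20 : 0 <= Q2.
  apply: sumr_ge0 => x1 _; apply: sumr_ge0 => y _.
  have [p_ge0 _] := pd; have [q_ge0 _] := qd.
  by rewrite /If; case: ifP => _; rewrite ?mulr0 ?mulr1 // mulr_ge0.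
set e := expfactor eps Hs.
have [ee0 eQ] : 0 <= e /\ e <= Q2.
  rewrite /e /expfactor; case: ifPn => ep.
    split; first exact: ltW (expR_gt0 _).
    rewrite /Q2 -(Q_eq _ _ _ _ Delta hp hq); exact: key.
  by rewrite lim_zero.
apply: ler_wsqrtr.
case: (lerP (dbar A r ^+ 2) (Delta ^+ 2)) => hd.
  have := D2_le _ _ _ pd qd (fun x y => X2_le x y).
  rewrite sumsum_const // => h.
  apply: (le_trans h); nra.
have hpt : forall x y : vec A r * vec A r, Xf x y ^+ 2 <= dbar A r ^+ 2 - (dbar A r ^+ 2 - Delta ^+ 2) * If Delta x y.
  move=> x1 y; rewrite /If; case: ifP => hx; last by rewrite mulr0 subr0; exact: X2_le.
  rewrite mulr1 -(real_normK (num_real (Xf x1 y))); have := normr_ge0 (Xf x1 y); nra.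
have h := D2_le _ _ _ pd qd hpt.
have ex : forall x y : vec A r * vec A r, p x * q y * (dbar A r ^+ 2 - (dbar A r ^+ 2 - Delta ^+ 2) * If Delta x y)
  = p x * q y * dbar A r ^+ 2 - (dbar A r ^+ 2 - Delta ^+ 2) * (p x * q y * If Delta x y).
  by move=> x1 y; ring.
have e2 : \sum_x \sum_y p x * q y * (dbar A r ^+ 2 - (dbar A r ^+ 2 - Delta ^+ 2) * If Delta x y)
  = dbar A r ^+ 2 - (dbar A r ^+ 2 - Delta ^+ 2) * Q2.
  under eq_bigr do under eq_bigr do rewrite ex.
  under eq_bigr do rewrite sumrB -mulr_sumr.
  by rewrite sumrB -mulr_sumr sumsum_const.
rewrite /= e2 in h.
apply: (le_trans h); nra.
Qed.
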